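(* In the DID setting of the context with $N_1\ge1$ fixed, suppose Assumptions 1 and 2 hold. Consider testing $H_0:\alpha=\alpha_0$ at significance level $\tau$ by rejecting when $\widehat\alpha-\alpha_0$ is below the $\tau/2$-quantile or above the $1-\tau/2$-quantile of $\widehat F$. Then, as $N_0\to\infty$, this test is asymptotically of level $\tau$ (the limiting rejection probability under $H_0$ is at most $\tau$), for every $\tau\in(0,1)$.
   Context: Units $i\in\mathcal I_1$ (treated, $|\mathcal I_1|=N_1$) and $i\in\mathcal I_0$ (control, $|\mathcal I_0|=N_0$), periods $t=1,\dots,T$; $\mathcal T_0=\{1,\dots,t^\ast\}$, $\mathcal T_1=\{t^\ast+1,\dots,T\}$, $T$ fixed. Potential outcomes: $Y_{it}(0)=\theta_i+\gamma_t+\eta_{it}$, $Y_{it}(1)=\alpha_{it}+Y_{it}(0)$; observed $Y_{it}=Y_{it}(1)$ if $i\in\mathcal I_1,t\in\mathcal T_1$, else $Y_{it}(0)$. The $\alpha_{it}$ are fixed and $\alpha=\frac{1}{N_1}\frac{1}{T-t^\ast}\sum_{i\in\mathcal I_1}\sum_{t\in\mathcal T_1}\alpha_{it}$. For a sequence $A_t$, $\nabla A=\frac{1}{T-t^\ast}\sum_{t\in\mathcal T_1}A_t-\frac{1}{t^\ast}\sum_{t\in\mathcal T_0}A_t$; $W_i=\nabla\eta_{i\cdot}$. $\widehat\alpha=\frac{1}{N_1}\sum_{i\in\mathcal I_1}\nabla Y_i-\frac{1}{N_0}\sum_{i\in\mathcal I_0}\nabla Y_i$; control residuals $\widehat W_i=\nabla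 Y_i-\frac1{N_0}\sum_{j\in\mathcal I_0}\nabla Y_j$; $\widehat F(c)=N_0^{-1}\sum_{i\in\mathcal I_0}\mathbbm 1\{\widehat W_i\le c\}$. Treatment assignment is fixed. Assumption 1: (i) $\mathbb E[W_i]=0$ for all $i$; (ii) all $W_i$ have the same marginal distribution, with continuous cdf $F$ and finite second moment; (iii) as $N_0\to\infty$, $\frac1{N_0}\sum_{i\in\mathcal I_0}W_i\xrightarrow{p}0$ and $\frac1{N_0}\sum_{i\in\mathcal I_0}\mathbbm 1\{W_i\le c\}\xrightarrow{p}F(c)$ for each $c$. The errors of the treated units may be arbitrarily correlated with each other. Assumption 2: for every $\tau\in(0,1)$, letting $c_\tau$ denote the $\tau$-quantile of $F$ and $\widetilde W=N_1^{-1}\sum_{i\in\mathcal I_1}W_i$, one has $\Pr(\{\widetilde W\le c_{\tau/2}\}\cup\{\widetilde W>c_{1-\tau/2}\})\le\tau$. *)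

(* Defs.v *)
From HB Require Import structures.
From mathcomp Require Import all_boot all_order all_algebra.
From mathcomp Require Import all_classical all_reals all_analysis.
Set Implicit Arguments. Unset Strict Implicit. Unset Printing Implicit Defensive.
Import Order.TTheory GRing.Theory Num.Theory.
Local Open Scope ring_scope.

(* Periods are t : 'I_T (t = 0, ..., T-1); the pre-treatment periods are
   those with t < tstar (there are tstar of them) and the post-treatment
   periods those with tstar <= t (there are T - tstar of them). *)

Definition nabla {R : realType} (T tstar : nat) (A : 'I_T -> R) : R :=
  (T - tstar)%:R^-1 * (\sum_(t < T | (tstar <= t)%N) A t)
  - tstar%:R^-1 * (\sum_(t < T | (t < tstar)%N) A t).

(* Observed outcome of treated unit i at period t (Y_it(1) after tstar,
   Y_it(0) before), with Y_it(0) = theta_i + gamma_t + eta_it. *)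
Definition Ytreat {R : realType} {Omega : Type} (N1 T tstar : nat)
  (theta1 : 'I_N1 -> R) (gamma : 'I_T -> R) (alpha : 'I_N1 -> 'I_T -> R)
  (eta1 : 'I_N1 -> 'I_T -> Omega -> R) (i : 'I_N1) (t : 'I_T) (w : Omega) : R :=
  if (tstar <= t)%N then alpha i t + (theta1 i + gamma t + eta1 i t w)
  else theta1 i + gamma t + eta1 i t w.

(* Observed outcome of control unit i (controls are indexed by nat; the
   sample with N0 controls consists of units 0, ..., N0-1). *)
Definition Ycontrol {R : realType} {Omega : Type} (T : nat)
  (theta0 : nat -> R) (gamma : 'I_T -> R)
  (eta0 : nat -> 'I_T -> Omega -> R) (i : nat) (t : 'I_T) (w : Omega) : R :=
  theta0 i + gamma t + eta0 i t w.

Definition Wof {R : realType} {Omega : Type} (T tstar : nat)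
  (eta : 'I_T -> Omega -> R) (w : Omega) : R :=
  nabla tstar (fun t => eta t w).

Definition ATT {R : realType} (N1 T tstar : nat) (alpha : 'I_N1 -> 'I_T -> R) : R :=
  (N1%:R^-1 * (T - tstar)%:R^-1) *
  \sum_(i < N1) \sum_(t < T | (tstar <= t)%N) alpha i t.

Definition alpha_hat {R : realType} {Omega : Type} (N1 T tstar : nat)
  (theta1 : 'I_N1 -> R) (theta0 : nat -> R) (gamma : 'I_T -> R)
  (alpha : 'I_N1 -> 'I_T -> R)
  (eta1 : 'I_N1 -> 'I_T -> Omega -> R) (eta0 : nat -> 'I_T -> Omega -> R)
  (N0 : nat) (w : Omega) : R :=
  N1%:R^-1 * (\sum_(i < N1)
     nabla tstar (fun t => Ytreat tstar theta1 gamma alpha eta1 i t w))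
  - N0%:R^-1 * (\sum_(i < N0)
     nabla tstar (fun t => Ycontrol theta0 gamma eta0 i t w)).

Definition W_hat {R : realType} {Omega : Type} (T tstar : nat)
  (theta0 : nat -> R) (gamma : 'I_T -> R) (eta0 : nat -> 'I_T -> Omega -> R)
  (N0 : nat) (i : nat) (w : Omega) : R :=
  nabla tstar (fun t => Ycontrol theta0 gamma eta0 i t w)
  - N0%:R^-1 * (\sum_(j < N0)
     nabla tstar (fun t => Ycontrol theta0 gamma eta0 j t w)).

Definition F_hat {R : realType} {Omega : Type} (T tstar : nat)
  (theta0 : nat -> R) (gamma : 'I_T -> R) (eta0 : nat -> 'I_T -> Omega -> R)
  (N0 : nat) (w : Omega) (c : R) : R :=
  N0%:R^-1 * (\sum_(i < N0) ((W_hat tstar theta0 gamma eta0 N0 i w <= c)%R : nat)%:R).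

Definition quantile {R : realType} (G : R -> R) (p : R) : R :=
  inf [set c | p <= G c].

(* Main.v *)
Require Import Defs.
From HB Require Import structures.
From mathcomp Require Import all_boot all_order all_algebra.
From mathcomp Require Import all_classical all_reals all_analysis.
From mathcomp Require Import ring lra.
From mathcomp Require Import measurable_realfun.
Import Order.TTheory GRing.Theory Num.Theory.
Import numFieldNormedType.Exports.
Local Open Scope ring_scope.
Local Open Scope classical_set_scope.
Section Alg.
Variables (R : realType) (T tstar : nat).
Hypotheses (h0 : (0 < tstar)%N) (hT : (tstar < T)%N).

Lemma nablaD (f g : 'I_T -> R) :
  nabla tstar (fun t => f t + g t) = nabla tstar f + nabla tstar g.
Proof. rewrite /nabla !big_split /=; ring. Qed.

Lemma card_post : \sum_(t < T | (tstar <= t)%N) (1:R) = (T - tstar)%:R.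
Proof. rewrite (eq_bigl (fun t : 'I_T => predT t && (tstar <= t)%N)) //.
rewrite -(@big_geq_mkord _ _ _ tstar T predT (fun _ => (1:R))).
by rewrite sumr_const_nat. Qed.

Lemma card_pre : \sum_(t < T | (t < tstar)%N) (1:R) = tstar%:R.
Proof.
rewrite -(big_ord_widen _ (fun _ => (1:R)) (ltnW hT)).
by rewrite sumr_const card_ord.
Qed.

Lemma nablaC (c : R) : nabla tstar (fun _ : 'I_T => c) = 0.
Proof.
rewrite /nabla.
have -> : \sum_(t < T | (tstar <= t)%N) c = c * (T - tstar)%:R.
  by rewrite -card_post mulr_sumr; apply: eq_bigr => *; rewrite mulr1.
have -> : \sum_(t < T | (t < tstar)%N) c = c * tstar%:R.
  by rewrite -card_pre mulr_sumr; apply: eq_bigr => *; rewrite mulr1.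
have a1 : (T - tstar)%:R != 0 :> R by rewrite pnatr_eq0 subn_eq0 -ltnNge.
have a2 : tstar%:R != 0 :> R by rewrite pnatr_eq0 -lt0n.
by rewrite [_^-1 * (c * _)]mulrC -mulrA divff // [tstar%:R^-1 * _]mulrC -mulrA divff // subrr.
Qed.
End Alg.
Lemma sum3 (R : realType) n (a b : 'I_n -> R) (c : R) :
  \sum_(i < n) (a i + c + b i) = \sum_(i < n) a i + c * n%:R + \sum_(i < n) b i.
Proof. by rewrite !big_split /= sumr_const card_ord mulr_natr. Qed.

Lemma sum2 (R : realType) n (b : 'I_n -> R) (c : R) :
  \sum_(i < n) (c + b i) = c * n%:R + \sum_(i < n) b i.
Proof. by rewrite !big_split /= sumr_const card_ord mulr_natr. Qed.

Section Alg2.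
Variables (R : realType) (Omega : Type) (N1 T tstar : nat).
Hypotheses (h0 : (0 < tstar)%N) (hT : (tstar < T)%N).
Variables (theta1 : 'I_N1 -> R) (theta0 : nat -> R) (gamma : 'I_T -> R)
  (alpha : 'I_N1 -> 'I_T -> R)
  (eta1 : 'I_N1 -> 'I_T -> Omega -> R) (eta0 : nat -> 'I_T -> Omega -> R).

Lemma nabla_if (f : 'I_T -> R) :
  nabla tstar (fun t => if (tstar <= t)%N then f t else 0) =
  (T - tstar)%:R^-1 * \sum_(t < T | (tstar <= t)%N) f t.
Proof.
rewrite /nabla (big1 _ (fun t : 'I_T => (t < tstar)%N)); last first.
  by move=> t; rewrite ltnNge => /negbTE ->.
rewrite mulr0 subr0; congr (_ * _); apply: eq_bigr => t -> //.
Qed.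

Lemma nabla_treat i w :
  nabla tstar (fun t => Ytreat tstar theta1 gamma alpha eta1 i t w) =
  (T - tstar)%:R^-1 * \sum_(t < T | (tstar <= t)%N) alpha i t
  + nabla tstar gamma + Wof tstar (eta1 i) w.
Proof.
have -> : (fun t => Ytreat tstar theta1 gamma alpha eta1 i t w) =
  (fun t => (if (tstar <= t)%N then alpha i t else 0) +
    (theta1 i + (gamma t + eta1 i t w))).
  apply: funext => t; rewrite /Ytreat; case: ifP => _; rewrite ?add0r !addrA //.

rewrite nablaD nabla_if nablaD nablaC // add0r nablaD addrA.
done.
Qed.

Lemma nabla_control i w :
  nabla tstar (fun t => Ycontrol theta0 gamma eta0 i t w) =
  nabla tstar gamma + Wof tstar (eta0 i) w.
Proof.
have -> : (fun t => Ycontrol theta0 gamma eta0 i t w) =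
  (fun t => theta0 i + (gamma t + eta0 i t w)).
  by apply: funext => t; rewrite /Ycontrol addrA.
by rewrite nablaD nablaC // add0r nablaD.
Qed.

Lemma W_hat_eq N0 i w : (0 < N0)%N ->
  W_hat tstar theta0 gamma eta0 N0 i w =
  Wof tstar (eta0 i) w - N0%:R^-1 * \sum_(j < N0) Wof tstar (eta0 j) w.
Proof.
move=> hN0; rewrite /W_hat nabla_control.
under eq_bigr do rewrite nabla_control.
rewrite sum2 mulrDr.
have a1 : N0%:R != 0 :> R by rewrite pnatr_eq0 -lt0n.
rewrite mulrCA mulVf // mulr1; ring.
Qed.

Lemma alpha_hat_eq N0 w alpha0 : (0 < N0)%N -> (0 < N1)%N ->
  ATT tstar alpha = alpha0 ->
  alpha_hat tstar theta1 theta0 gamma alpha eta1 eta0 N0 w - alpha0 =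
  N1%:R^-1 * (\sum_(i < N1) Wof tstar (eta1 i) w)
  - N0%:R^-1 * \sum_(j < N0) Wof tstar (eta0 j) w.
Proof.
move=> hN0 hN1 <-; rewrite /alpha_hat /ATT.
under eq_bigr do rewrite nabla_treat.
under [X in _ - N0%:R^-1 * X]eq_bigr do rewrite nabla_control.
rewrite sum3 sum2.
have a1 : N0%:R != 0 :> R by rewrite pnatr_eq0 -lt0n.
have a2 : N1%:R != 0 :> R by rewrite pnatr_eq0 -lt0n.
have a3 : (T - tstar)%:R != 0 :> R by rewrite pnatr_eq0 subn_eq0 -ltnNge.
rewrite -mulr_sumr.
set s1 := \sum_(i < N1) \sum_(t < T | (tstar <= t)%N) alpha i t.
set s2 := \sum_(i < N1) Wof tstar (eta1 i) w.
set s3 := \sum_(i < N0) Wof tstar (eta0 i) w.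
set g := nabla tstar gamma.
by field; rewrite a1 a2 a3.
Qed.
End Alg2.
Section Meas.
Variables (d : measure_display) (Omega : measurableType d) (R : realType).
Implicit Types f g : Omega -> R.

Lemma mle_set f g : measurable_fun setT f -> measurable_fun setT g ->
  measurable [set w | f w <= g w].
Proof.
move=> mf mg.
have := measurable_lee measurableT (proj2 (measurable_EFinP _ _) mf)
  (proj2 (measurable_EFinP _ _) mg).
by rewrite setTI; congr measurable; apply/seteqP; split => w /=; rewrite lee_fin.
Qed.

Lemma mlt_set f g : measurable_fun setT f -> measurable_fun setT g ->
  measurable [set w | f w < g w].
Proof.
move=> mf mg.
have := measurable_lte measurableT (proj2 (measurable_EFinP _ _) mf)
  (proj2 (measurable_EFinP _ _) mg).
by rewrite setTI; congr measurable; apply/seteqP; split => w /=; rewrite lte_fin.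
Qed.

Lemma mind f g : measurable_fun setT f -> measurable_fun setT g ->
  measurable_fun setT (fun w => ((f w <= g w)%R : nat)%:R : R).
Proof.
move=> mf mg.
have -> : (fun w => ((f w <= g w)%R : nat)%:R : R) =
   \1_[set w | f w <= g w].
  apply: funext => w; rewrite indicE; case h: (f w <= g w).
    by rewrite mem_set.
  by rewrite memNset //= h.
exact/measurable_indic/mle_set.
Qed.

Lemma msum n (h : 'I_n -> Omega -> R) :
  (forall i, measurable_fun setT (h i)) ->
  measurable_fun setT (fun w => \sum_(i < n) h i w).
Proof. by move=> mh; apply: measurable_sum. Qed.

Lemma mWof T tstar (eta : 'I_T -> Omega -> R) :
  (forall t, measurable_fun setT (eta t)) ->
  measurable_fun setT (Wof tstar eta).
Proof.
move=> me; rewrite /Wof /nabla.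
apply: measurable_funB; apply: measurable_funM => //.
all: try exact: measurable_cst.
- have -> : (fun x => \sum_(t < T | (tstar <= t)%N) eta t x) =
    (fun x => \sum_(t < T) (if (tstar <= t)%N then eta t x else 0)).
    by apply: funext => x; rewrite big_mkcond.
  apply: msum => t; case: (tstar <= t)%N => //; exact: measurable_cst.
- have -> : (fun x => \sum_(t < T | (t < tstar)%N) eta t x) =
    (fun x => \sum_(t < T) (if (t < tstar)%N then eta t x else 0)).
    by apply: funext => x; rewrite big_mkcond.
  apply: msum => t; case: (t < tstar)%N => //; exact: measurable_cst.
Qed.
End Meas.
Arguments mle_set {d Omega R f g}.
Arguments mlt_set {d Omega R f g}.
Arguments mind {d Omega R f g}.
Arguments msum {d Omega R n h}.
Arguments mWof {d Omega R T} tstar {eta}.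
Section Emp.
Variables (R : realType) (n : nat) (x : 'I_n -> R).
Hypothesis hn : (0 < n)%N.
Definition G (c : R) : R := n%:R^-1 * (\sum_(i < n) ((x i <= c)%R : nat)%:R).

Lemma G_mono c c' : c <= c' -> G c <= G c'.
Proof.
move=> cc; rewrite /G ler_wpM2l // ?invr_ge0 //.
apply: ler_sum => i _; rewrite ler_nat.
by case h: (x i <= c) => //=; rewrite (le_trans h cc).
Qed.

Let B := \sum_(i < n) `|x i|.
Lemma xB i : - B <= x i /\ x i <= B.
Proof.
have : `|x i| <= B by rewrite /B (bigD1 i) //= lerDl sumr_ge0.
by rewrite ler_norml; case/andP; rewrite lerNl => *; split.
Qed.

Lemma G_one c : (forall i, x i <= c) -> G c = 1.
Proof.
move=> h; rewrite /G (eq_bigr (fun _ => 1)); last by move=> i _; rewrite h.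
rewrite sumr_const card_ord mulVf // pnatr_eq0 -lt0n //.
Qed.

Lemma G_pos c : 0 < G c -> exists i, x i <= c.
Proof.
move=> h; apply: contrapT => hn'.
move: h; rewrite /G big1 ?mulr0 ?ltxx // => i _.
by case h: (x i <= c) => //; case: hn'; exists i.
Qed.

Lemma argmax_le c : (exists i, x i <= c) ->
  exists j, x j <= c /\ forall k, x k <= c -> x k <= x j.
Proof.
case=> i0 h0.
case: (@arg_maxP _ R _ i0 (fun j => (x j <= c)%R) x h0) => j hj hmax.
by exists j; split => // k hk; apply: hmax.
Qed.

Variable p : R.
Hypotheses (hp0 : 0 < p) (hp1 : p <= 1).
Let S := [set c | p <= G c].

Lemma S_lb : has_lbound S.
Proof.
exists (- B) => c /= hc.
have [i hi] := G_pos _ (lt_le_trans hp0 hc).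
by apply: le_trans hi; case: (xB i).
Qed.

Lemma S_ne : nonempty S.
Proof. exists B; rewrite /S /= G_one // => i; by case: (xB i). Qed.

Lemma C2 c : p <= G c -> quantile G p <= c.
Proof. by move=> hc; apply: ge_inf; [exact: S_lb|]. Qed.

Lemma C3 b : G b < p -> b <= quantile G p.
Proof.
move=> hb; apply: lb_le_inf; first exact: S_ne.
move=> c /= hc; rewrite leNgt; apply/negP => cb.
have := G_mono _ _ (ltW cb); move: hb hc; rewrite /=.
move=> h1 h2 h3. have := le_lt_trans h2 (le_lt_trans h3 h1). by rewrite ltxx.
Qed.

Lemma C1 a : a <= quantile G p <-> (forall j, p <= G (x j) -> a <= x j).
Proof.
split.
  by move=> h j hj; apply: (le_trans h); apply: C2.
move=> h; apply: lb_le_inf; first exact: S_ne.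
move=> c /= hc.
have [j [hj hmax]] := argmax_le _ (G_pos _ (lt_le_trans hp0 hc)).
have hGj : G c <= G (x j).
  rewrite /G ler_wpM2l ?invr_ge0 // ; apply: ler_sum => k _; rewrite ler_nat.
  by case hk: (x k <= c) => //=; rewrite (hmax k hk).
exact: le_trans (h j (le_trans hc hGj)) hj.
Qed.
End Emp.
Arguments G {R n} x c.
Lemma cont_ed {R : realType} {F : R -> R} {q} : continuous_at q F ->
  forall e, 0 < e -> exists2 δ, 0 < δ & forall t, `|q - t| < δ -> `|F q - F t| < e.
Proof.
move=> hF e e0; have := (cvgrPdist_lt _ _).1 hF e e0.
move=> H; have [δ /= δ0 Hδ] := (nbhs_ballP q _).1 (H _).
by exists δ => // t ht; apply: Hδ; rewrite /ball /=.
Qed.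


Lemma nlb_ex {R : realType} {S : set R} b : ~ has_lbound S -> exists c, S c /\ c <= b.
Proof.
move=> h; apply: contrapT => hn; apply: h; exists b => c Sc.
rewrite leNgt; apply/negP => cb; apply: hn; exists c; split => //; exact: ltW.
Qed.

Lemma Fq (R : realType) (F : R -> R) (Fm : forall x y, x <= y -> F x <= F y)
  (Fc : continuous F)
  (hne : forall t, 0 < t < 1 -> quantile F (t/2) <> quantile F (1 - t/2))
  (tau tau' : R) (h0 : 0 < tau) (h1 : tau < tau') (h2 : tau' < 1) :
  (exists c', c' <= quantile F (tau'/2) /\ tau/2 < F c') /\
  (exists c'', quantile F (1 - tau'/2) <= c'' /\ F c'' < 1 - tau/2).
Proof.
have ht' : 0 < tau' < 1 by apply/andP; split => //; apply: lt_trans h1.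
have e0 : 0 < (tau' - tau) / 4 by rewrite divr_gt0 // subr_gt0.
split.
- set S := [set c | tau'/2 <= F c].
  have [Sne|S0] := pselect (S !=set0).
  + have [Slb|Snlb] := pselect (has_lbound S).
    * exists (quantile F (tau'/2)); split => //.
      set q := quantile F (tau'/2).
      have [δ δ0 Hδ] := cont_ed (Fc q) _ e0.
      have qlt : q < q + δ by rewrite ltrDl.
      have [s Ss slt] := inf_lt Sne qlt.
      have qs : q <= s := ge_inf Slb Ss.
      have := Hδ s; rewrite distrC ger0_norm ?subr_ge0 // ltrBlDl => /(_ slt).
      rewrite ltr_norml /S /= in Ss *; move=> /andP [+ _]; lra.
    * have [c [Sc cq]] := nlb_ex (quantile F (tau'/2)) Snlb.
      by exists c; split => //; rewrite /S /= in Sc; lra.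
  + exfalso; apply: (hne tau' ht').
    rewrite /quantile.
    have -> : [set c | tau' / 2 <= F c] = set0.
      by apply/seteqP; split => // c Sc; apply: S0; exists c.
    have -> : [set c | 1 - tau' / 2 <= F c] = set0.
      apply/seteqP; split => // c /= Sc; apply: S0; exists c; rewrite /S /=.
      move: ht' => /andP [? ?]; lra.
    by [].
- set S2 := [set c | 1 - tau'/2 <= F c].
  have [Sne|S0] := pselect (S2 !=set0).
  + have [Slb|Snlb] := pselect (has_lbound S2).
    * exists (quantile F (1 - tau'/2)); split => //.
      set q := quantile F (1 - tau'/2).
      have [δ δ0 Hδ] := cont_ed (Fc q) _ e0.
      have nS : ~ S2 (q - δ / 2).
        move=> Sx; have := ge_inf Slb Sx; rewrite -/q.
        have : 0 < δ / 2 by rewrite divr_gt0.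
        lra.
      have := Hδ (q - δ / 2).
      have -> : q - (q - δ / 2) = δ / 2 by ring.
      rewrite ger0_norm ?divr_ge0 ?ltW // ltr_pdivrMr // ltr_pMr // ltr1n.
      move=> /(_ isT); rewrite ltr_norml => /andP [_ +].
      rewrite /S2 /= in nS; lra.
    * exfalso; apply: (hne tau' ht').
      have allS : forall c, 1 - tau' / 2 <= F c.
        move=> c; have [c0 [Sc0 c0c]] := nlb_ex c Snlb.
        exact: le_trans Sc0 (Fm _ _ c0c).
      rewrite /quantile.
      have -> : [set c | tau' / 2 <= F c] = setT.
        apply/seteqP; split => // c _ /=; have := allS c.
        move: ht' => /andP [? ?]; lra.
      have -> : [set c | 1 - tau' / 2 <= F c] = setT.
        by apply/seteqP; split => // c _ /=; apply: allS.
      by [].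
  + exists (quantile F (1 - tau'/2)); split => //.
    have : ~ S2 (quantile F (1 - tau'/2)) by move=> Sx; apply: S0; eexists; exact: Sx.
    rewrite /S2 /=; lra.
Qed.
Lemma ev_small (R : realType) (u : nat -> \bar R) : u @ \oo --> 0%E ->
  forall eps : R, 0 < eps -> exists M, forall n, (M <= n)%N -> (u n <= eps%:E)%E.
Proof.
move=> /fine_cvgP [hfin hc] eps ep.
have H := (cvgrPdist_lt _ _).1 hc eps ep.
have : \forall n \near \oo, (u n <= eps%:E)%E.
  have H' := H ltac:(typeclasses eauto).
  move: H' hfin; apply: filterS2 => n h1 h2.
  rewrite -(fineK h2) lee_fin; move: h1; rewrite sub0r normrN => h1.
  exact: le_trans (ler_norm _) (ltW h1).
by case=> M _ HM; exists M => n hn; apply: HM.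
Qed.
Theorem proposition2
  (R : realType) (d : measure_display) (Omega : measurableType d)
  (P : probability Omega R)
  (N1 T tstar : nat) (hN1 : (1 <= N1)%N) (htstar0 : (0 < tstar)%N)
  (htstarT : (tstar < T)%N)
  (theta1 : 'I_N1 -> R) (theta0 : nat -> R) (gamma : 'I_T -> R)
  (alpha : 'I_N1 -> 'I_T -> R)
  (eta1 : 'I_N1 -> 'I_T -> Omega -> R) (eta0 : nat -> 'I_T -> Omega -> R)
  (meas1 : forall i t, measurable_fun setT (eta1 i t))
  (meas0 : forall i t, measurable_fun setT (eta0 i t))
  (F : R -> R)
  (* Assumption 1 (i): mean zero *)
  (A1i_1 : forall i, ('E_P[Wof tstar (eta1 i)] = 0)%E)
  (A1i_0 : forall i, ('E_P[Wof tstar (eta0 i)] = 0)%E)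
  (* Assumption 1 (ii): common marginal with continuous cdf F, finite
     second moment *)
  (A1ii_F : continuous F)
  (A1ii_1 : forall i c, P [set w | Wof tstar (eta1 i) w <= c] = (F c)%:E)
  (A1ii_0 : forall i c, P [set w | Wof tstar (eta0 i) w <= c] = (F c)%:E)
  (A1ii_m1 : forall i,
     P.-integrable setT (fun w => ((Wof tstar (eta1 i) w) ^+ 2)%:E))
  (A1ii_m0 : forall i,
     P.-integrable setT (fun w => ((Wof tstar (eta0 i) w) ^+ 2)%:E))
  (* Assumption 1 (iii): laws of large numbers over the controls *)
  (A1iii_mean : forall e : R, 0 < e ->
     (fun N0 : nat => P [set w | e <=
        `| N0%:R^-1 * (\sum_(i < N0) Wof tstar (eta0 i) w) |])
     @ \oo --> 0%E)
  (A1iii_cdf : forall (c e : R), 0 < e ->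
     (fun N0 : nat => P [set w | e <=
        `| N0%:R^-1 * (\sum_(i < N0) ((Wof tstar (eta0 i) w <= c)%R : nat)%:R)
           - F c |])
     @ \oo --> 0%E)
  (* Assumption 2 *)
  (A2 : forall tau : R, 0 < tau < 1 ->
     (P [set w | (let Wt := N1%:R^-1 * (\sum_(i < N1) Wof tstar (eta1 i) w) in
                Wt <= quantile F (tau / 2) \/
                quantile F (1 - tau / 2) < Wt)%R] <= tau%:E)%E)
  (* the null hypothesis H0 : alpha = alpha0 *)
  (alpha0 : R) (H0 : ATT tstar alpha = alpha0) :
  forall tau : R, 0 < tau < 1 ->
  forall e : R, 0 < e ->
  exists M : nat, forall N0 : nat, (M <= N0)%N ->
    (P [set w | (
       let a := alpha_hat tstar theta1 theta0 gamma alpha eta1 eta0 N0 w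
                - alpha0 in
       let Fh := F_hat tstar theta0 gamma eta0 N0 w in
       a <= quantile Fh (tau / 2) \/ quantile Fh (1 - tau / 2) < a)%R]
    <= (tau + e)%:E)%E.
Proof.
move=> tau /andP[t0 t1] e e0.
pose W0 i := Wof tstar (eta0 i).
pose W1 i := Wof tstar (eta1 i).
have mW0 : forall i, measurable_fun setT (W0 i) := fun i => mWof tstar (meas0 i).
have mW1 : forall i, measurable_fun setT (W1 i) := fun i => mWof tstar (meas1 i).
pose Wt w := N1%:R^-1 * \sum_(i < N1) W1 i w.
have mWt : measurable_fun setT Wt.
  apply: measurable_funM; first exact: measurable_cst.
  by apply: msum => i; exact: mW1.
have Fm : forall x y, x <= y -> F x <= F y.
  move=> x y xy; rewrite -lee_fin -(A1ii_0 0) -(A1ii_0 0).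
  apply: le_measure; rewrite ?inE.
  - exact: mle_set (mW0 0%N) (measurable_cst x).
  - exact: mle_set (mW0 0%N) (measurable_cst y).
  - by move=> w /= h; exact: le_trans h xy.
have hne : forall t, 0 < t < 1 -> quantile F (t/2) <> quantile F (1 - t/2).
  move=> t ht heq; have := A2 t ht; rewrite heq.
  rewrite [X in (P X <= _)%E](_ : _ = setT); last first.
    apply/seteqP; split => // w _ /=.
    by case: leP => h; [left|right].
  by rewrite probability_setT lee_fin; move: ht => /andP [_]; lra.
have [e' [e'0 [e'e e't]]] : exists e', 0 < e' /\ e' <= e /\ e' <= 1 - tau.
  by case: (leP e (1 - tau)) => h; [exists e | exists (1 - tau)];
     rewrite ?subr_gt0 //; split => //; split => //; lra.
pose tau' := tau + e' / 2.
have tt' : tau < tau' by rewrite /tau'; lra.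
have t'1 : tau' < 1 by rewrite /tau'; lra.
have ht' : 0 < tau' < 1 by apply/andP; split; lra.
have [[c' [c'q Fc']] [c'' [c''q Fc'']]] := Fq _ _ Fm A1ii_F hne _ _ t0 tt' t'1.
have d1p : 0 < F c' - tau / 2 by lra.
have d2p : 0 < 1 - tau / 2 - F c'' by lra.
have e4 : 0 < e' / 4 by lra.
have [M1 HM1] := ev_small _ _ (A1iii_cdf c' _ d1p) _ e4.
have [M2 HM2] := ev_small _ _ (A1iii_cdf c'' _ d2p) _ e4.
exists (maxn 1 (maxn M1 M2)) => N0.
rewrite !geq_max => /and3P [hN0pos hM1 hM2].
have hB1 := HM1 N0 hM1.
have hB2 := HM2 N0 hM2.
have hA := A2 tau' ht'.
set B1 := (X in (P X <= _)%E) in hB1.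
set B2 := (X in (P X <= _)%E) in hB2.
set A := (X in (P X <= _)%E) in hA.
set Ev := (X in (P X <= _)%E).
have N0n : N0%:R != 0 :> R by rewrite pnatr_eq0 -lt0n.
pose m w := N0%:R^-1 * \sum_(j < N0) W0 j w.
have mm : measurable_fun setT m.
  apply: measurable_funM; first exact: measurable_cst.
  by apply: msum => i; exact: mW0.
pose X (i : 'I_N0) w := W_hat tstar theta0 gamma eta0 N0 i w.
have XE : forall i w, X i w = W0 i w - m w :=
  fun i w => @W_hat_eq R Omega T tstar htstar0 htstarT theta0 gamma eta0 N0 i w hN0pos.
have mX : forall i, measurable_fun setT (X i).
  move=> i; rewrite (_ : X i = fun w => W0 i w - m w); last by apply: funext => w; exact: XE.
  exact: measurable_funB.
pose am w := alpha_hat tstar theta1 theta0 gamma alpha eta1 eta0 N0 w - alpha0.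
have amE : forall w, am w = Wt w - m w := fun w =>
  @alpha_hat_eq R Omega N1 T tstar htstar0 htstarT theta1 theta0 gamma alpha eta1 eta0
    N0 w alpha0 hN0pos hN1 H0.
have mam : measurable_fun setT am.
  rewrite (_ : am = fun w => Wt w - m w); last by apply: funext => w; exact: amE.
  exact: measurable_funB.
pose Gw w := G (fun i : 'I_N0 => X i w).
have mGj : forall j, measurable_fun setT (fun w => Gw w (X j w)).
  move=> j; apply: measurable_funM; first exact: measurable_cst.
  by apply: msum => i; exact: mind.
have GwE : forall w c, Gw w (c - m w) =
    N0%:R^-1 * \sum_(i < N0) ((W0 i w <= c)%R : nat)%:R.
  move=> w c; rewrite /Gw /G; congr (_ * _); apply: eq_bigr => i _.
  by rewrite XE lerD2r.
pose Q p := [set w | forall j : 'I_N0, p <= Gw w (X j w) -> am w <= X j w].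
have c1 : forall p, 0 < p -> p <= 1 -> forall w,
    am w <= quantile (Gw w) p <-> Q p w.
  move=> p hp0 hp1 w; have H := (@C1 R N0 (fun i : 'I_N0 => X i w) hN0pos p hp0 hp1 (am w)).
  exact: H.
have ht2 : 0 < tau / 2 by lra.
have ht2' : tau / 2 <= 1 by lra.
have ht3 : 0 < 1 - tau / 2 by lra.
have ht3' : 1 - tau / 2 <= 1 by lra.
have EvQ : Ev = Q (tau/2) `|` ~` Q (1 - tau/2).
  apply/seteqP; split => w /=.
  - case=> h; [left; exact/(c1 _ ht2 ht2')|right => hq].
    by have := (c1 _ ht3 ht3' w).2 hq; rewrite leNgt h.
  - case=> h; [left; exact/(c1 _ ht2 ht2')|right].
    rewrite ltNge; apply/negP => h'; apply: h; exact/(c1 _ ht3 ht3').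
have mQ : forall p, measurable (Q p).
  move=> p.
  rewrite (_ : Q p = \bigcap_(k in setT) [set w | forall h : (k < N0)%N,
      p <= Gw w (X (Ordinal h) w) -> am w <= X (Ordinal h) w]); last first.
    apply/seteqP; split => w /=.
    - by move=> H k _ h; exact: H.
    - by move=> H [k h]; exact: H k I h.
  apply: bigcap_measurableType => k _.
  have [hk|hk] : (k < N0)%N \/ ~~ (k < N0)%N by case: (k < N0)%N; [left|right].
  - rewrite (_ : [set w | _] = [set w | Gw w (X (Ordinal hk) w) < p] `|`
        [set w | am w <= X (Ordinal hk) w]).
      apply: measurableU; first exact: mlt_set (mGj _) (measurable_cst p).
      exact: mle_set mam (mX _).
    apply/seteqP; split => w /=.
    + move=> H; case: (ltP (Gw w (X (Ordinal hk) w)) p) => hp; first by left.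
      by right; apply: H.
    + move=> H h; have -> : Ordinal h = Ordinal hk by apply: val_inj.
      case: H => [hlt|hle] hp //.
      by move: hp; rewrite leNgt hlt.
  - rewrite (_ : [set w | _] = setT) //.
    by apply/seteqP; split => // w _ /= h; rewrite h in hk.
have mEv : measurable Ev by rewrite EvQ; apply: measurableU; [|apply: measurableC].
have mA : measurable A.
  exact: measurableU (mle_set mWt (measurable_cst _)) (mlt_set (measurable_cst _) mWt).
have mGW : forall c, measurable_fun setT
    (fun w => N0%:R^-1 * \sum_(i < N0) ((W0 i w <= c)%R : nat)%:R : R).
  move=> c; apply: measurable_funM; first exact: measurable_cst.
  by apply: msum => i; exact: mind (mW0 i) (measurable_cst c).
have mB : forall c d0, measurable [set w | d0 <=
    `|N0%:R^-1 * \sum_(i < N0) ((W0 i w <= c)%R : nat)%:R - F c|].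
  move=> c d0; apply: mle_set (measurable_cst d0) _.
  apply: measurableT_comp; first exact: normr_measurable.
  exact: measurable_funB (mGW c) (measurable_cst _).
have mB1 : measurable B1 by exact: mB.
have mB2 : measurable B2 by exact: mB.
have sub : Ev `<=` A `|` B1 `|` B2.
  move=> w Evw; apply: contrapT => hn.
  have nA : ~ A w by move=> h; apply: hn; left; left.
  have nB1 : ~ B1 w by move=> h; apply: hn; left; right.
  have nB2 : ~ B2 w by move=> h; apply: hn; right.
  rewrite /B1 /= in nB1; rewrite /B2 /= in nB2.
  move/negP: nB1; rewrite -ltNge ltr_norml => /andP [l1 _].
  move/negP: nB2; rewrite -ltNge ltr_norml => /andP [_ u2].
  have g1 := GwE w c'; have g2 := GwE w c''.
  rewrite /W0 in g1 g2.
  have q1 : quantile (Gw w) (tau/2) <= c' - m w.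
    apply: (@C2 R N0 (fun i => X i w) (tau/2) ht2 (c' - m w)).
    change (tau/2 <= Gw w (c' - m w)); rewrite g1; lra.
  have q2 : c'' - m w <= quantile (Gw w) (1 - tau/2).
    apply: (@C3 R N0 (fun i => X i w) hN0pos (1 - tau/2) ht3' (c'' - m w)).
    change (Gw w (c'' - m w) < 1 - tau/2); rewrite g2; lra.
  change (am w <= quantile (Gw w) (tau/2) \/ quantile (Gw w) (1 - tau/2) < am w) in Evw.
  rewrite amE in Evw.
  apply: nA; change (Wt w <= quantile F (tau'/2) \/ quantile F (1 - tau'/2) < Wt w).
  by case: Evw => h; [left|right]; lra.
have mAB1 : measurable (A `|` B1) := measurableU _ _ mA mB1.
have h1 : (P Ev <= P (A `|` B1 `|` B2))%E.
  by apply: le_measure; rewrite ?inE //; exact: measurableU.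
apply: (le_trans h1); apply: (le_trans (measureU2 P mAB1 mB2)).
apply: (le_trans (leeD (@measureU2 _ _ _ P A B1 mA mB1) (lexx _))).
apply: (le_trans (leeD (leeD hA hB1) hB2)).
by rewrite -!EFinD lee_fin /tau'; lra.
Qed.
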